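(* If $\mathcal C_1$ and $\mathcal C_2$ are row-bounded classes of matrices, then the classes $\mathcal C_1\cup\mathcal C_2$ and $\mathcal C_1\cap\mathcal C_2$ are row-bounded as well.
   Context: All matrices are binary; rows numbered top to bottom, columns left to right; $(i,j)$ is the entry in row $i$, column $j$; $(a,b]=\{a+1,\dots,b\}$. A pattern $P\in\{0,1\}^{k\times\ell}$ is an interval minor of $M\in\{0,1\}^{m\times n}$ if there are integers $0=r_0<\dots<r_k=m$ and $0=c_0<\dots<c_\ell=n$ such that for each 1-entry $(i,j)$ of $P$ the submatrix of $M$ on rows $(r_{i-1},r_i]$ and columns $(c_{j-1},c_j]$ contains a 1-entry. A class of matrices is a set $\mathcal C$ of binary matrices closed under interval minors (if $M\in\mathcal C$ and $P$ is an interval minor of $M$ then $P\in\mathcal C$). $M\in\mathcal C$ is critical for $\mathcal C$ if changing any single 0-entry of $M$ into a 1-entry yields a matrix not in $\mathcal C$. A horizontal 0-run is a maximal set of consecutive 0-entries within one row; the complexity of a row is the number of such runs. The row-complexity of $\mathcal C$ is the supremum over all matrices critical for $\mathcal C$ of the maximum complexity of one of their rows; $\mathcal C$ is row-bounded if it is finite. *)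

(* Defs.v *)
From mathcomp Require Import all_boot.
Set Implicit Arguments. Unset Strict Implicit. Unset Printing Implicit Defensive.

(* A binary matrix with [rows] rows and [cols] columns; rows/columns are
   0-indexed here (row i of the paper is row i-1 here). *)
Record bmat := BMat {
  rows : nat;
  cols : nat;
  ent : {ffun 'I_rows * 'I_cols -> bool}
}.

(* Entry accessor on natural-number indices (false outside the matrix). *)
Definition entry (M : bmat) (a b : nat) : bool :=
  match @insub nat (fun x => x < rows M) _ a, @insub nat (fun x => x < cols M) _ b with
  | Some i, Some j => ent M (i, j)
  | _, _ => false
  end.

Definition partition_seq (r : nat -> nat) (k m : nat) : Prop :=
  r 0 = 0 /\ (forall i, i < k -> r i < r i.+1) /\ r k = m.

(* With 0-indexing, the block of pattern entry
   (i,j) consists of rows a with r i <= a < r (i+1) and columns b with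
   c j <= b < c (j+1) (i.e. rows (r_i, r_{i+1}] in the paper's 1-indexing). *)
Definition interval_minor (P M : bmat) : Prop :=
  exists r c : nat -> nat,
    partition_seq r (rows P) (rows M) /\ partition_seq c (cols P) (cols M) /\
    forall i j, i < rows P -> j < cols P -> entry P i j ->
      exists a b, [/\ r i <= a < r i.+1, c j <= b < c j.+1 & entry M a b].

Definition mclass := bmat -> Prop.

Definition is_class (C : mclass) : Prop :=
  forall M P, C M -> interval_minor P M -> C P.

Definition set_one (M : bmat) (i : 'I_(rows M)) (j : 'I_(cols M)) : bmat :=
  @BMat (rows M) (cols M) [ffun p => (p == (i, j)) || ent M p].

Definition critical (C : mclass) (M : bmat) : Prop :=
  C M /\ forall (i : 'I_(rows M)) (j : 'I_(cols M)),
    ent M (i, j) = false -> ~ C (set_one i j).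

(* Complexity of row i: number of maximal horizontal runs of 0-entries,
   counted by their first entries (a 0-entry at column 0 or preceded by a 1). *)
Definition row_complexity (M : bmat) (i : nat) : nat :=
  \sum_(j < cols M)
     (~~ entry M i j && ((nat_of_ord j == 0) || entry M i (nat_of_ord j).-1) : nat).

Definition row_bounded (C : mclass) : Prop :=
  exists B : nat, forall M, critical C M ->
    forall i, i < rows M -> row_complexity M i <= B.

Definition class_union (C1 C2 : mclass) : mclass := fun M => C1 M \/ C2 M.
Definition class_inter (C1 C2 : mclass) : mclass := fun M => C1 M /\ C2 M.

(* Main.v *)
From Stdlib Require Import Classical.
Require Import Defs.
From mathcomp Require Import all_boot.

Set Implicit Arguments. Unset Strict Implicit. Unset Printing Implicit Defensive.

Lemma entry_mono (r c : nat) (f g : {ffun 'I_r * 'I_c -> bool}) a b :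
  (forall p, f p -> g p) -> entry (BMat f) a b -> entry (BMat g) a b.
Proof.
move=> H; rewrite /entry /=.
case: insub => // i; case: insub => // j; exact: H.
Qed.

Lemma entry_ord (r c : nat) (f : {ffun 'I_r * 'I_c -> bool}) (i : 'I_r) (j : 'I_c) :
  entry (BMat f) i j = f (i, j).
Proof. by rewrite /entry /= !valK. Qed.

Lemma class_down (C : mclass) (r c : nat) (f g : {ffun 'I_r * 'I_c -> bool}) :
  is_class C -> C (BMat g) -> (forall p, f p -> g p) -> C (BMat f).
Proof.
move=> HC Hg Hfg; apply: (HC _ _ Hg).
exists id, id; split; first by split => //; split.
split; first by split => //; split.
move=> i j _ _ He; exists i, j; split; rewrite ?leqnn ?ltnSn //.
exact: entry_mono He.
Qed.

Lemma crit_ext (C : mclass) (r c : nat) :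
  is_class C -> forall n (f : {ffun 'I_r * 'I_c -> bool}),
  #|[pred p | ~~ f p]| <= n -> C (BMat f) ->
  exists g : {ffun 'I_r * 'I_c -> bool}, (forall p, f p -> g p) /\ critical C (BMat g).
Proof.
move=> HC; elim=> [|n IH] f Hn Hf.
  exists f; split => //; split => // i j Hij.
  move: Hn; rewrite leqn0 => /eqP/card0_eq/(_ (i, j)).
  by rewrite !inE Hij.
have [Hcr|Hncr] := classic (critical C (BMat f)).
  by exists f.
have [i [j [Hij HC1]]] : exists (i : 'I_r) (j : 'I_c), f (i, j) = false /\ C (set_one (M:=BMat f) i j).
  apply: NNPP => Hno; apply: Hncr; split => // i j Hij HCs; apply: Hno.
  by exists i, j.
set f' := [ffun p => (p == (i, j)) || f p].
have Hlt : #|[pred p | ~~ f' p]| < #|[pred p | ~~ f p]|.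
  apply: proper_card; apply/properP; split.
    by apply/subsetP => p; rewrite !inE /f' ffunE negb_or => /andP[].
  exists (i, j); by rewrite !inE ?/f' ?ffunE ?eqxx ?Hij.
have [g [Hfg Hcg]] := IH f' (leq_trans Hlt Hn) HC1.
  exists g; split => // p Hp; apply: Hfg; by rewrite /f' ffunE Hp orbT.
Qed.

Lemma entry_out (M : bmat) a b : ~~ (a < rows M) || ~~ (b < cols M) -> entry M a b = false.
Proof.
rewrite /entry => /orP[] H.
  by rewrite insubN.
by case: insub => // i; rewrite insubN.
Qed.

Theorem proposition4p2 (C1 C2 : mclass) :
  is_class C1 -> is_class C2 -> row_bounded C1 -> row_bounded C2 ->
  row_bounded (class_union C1 C2) /\ row_bounded (class_inter C1 C2).
Proof.
move=> HC1 HC2 [B1 HB1] [B2 HB2]; split.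
  exists (maxn B1 B2) => M [[H1|H2] Hc] i Hi.
    apply: leq_trans (leq_maxl _ _); apply: HB1 => //; split => // a b Hab H.
    by apply: (Hc a b Hab); left.
  apply: leq_trans (leq_maxr _ _); apply: HB2 => //; split => // a b Hab H.
  by apply: (Hc a b Hab); right.
exists (B1 + B2) => -[r c f] [[H1 H2] Hc] i Hi.
have [g1 [Hfg1 Hcr1]] := crit_ext HC1 (leqnn _) H1.
have [g2 [Hfg2 Hcr2]] := crit_ext HC2 (leqnn _) H2.
have Hz : forall p, f p = false -> g1 p = false \/ g2 p = false.
  move=> [a b] Hp; apply: NNPP => Hno; apply: (Hc a b Hp).
  have Hs : forall g : {ffun 'I_r * 'I_c -> bool}, (forall p, f p -> g p) -> g (a, b) ->
      forall q, [ffun q => (q == (a, b)) || f q] q -> g q.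
    move=> g Hfg Hgp q; rewrite ffunE => /orP[/eqP->|/Hfg//]; by [].
  split.
    apply: (class_down HC1 (proj1 Hcr1)); apply: Hs => //.
    by case E: (g1 (a, b)) => //; exfalso; apply: Hno; left.
  apply: (class_down HC2 (proj1 Hcr2)); apply: Hs => //.
  by case E: (g2 (a, b)) => //; exfalso; apply: Hno; right.
apply: leq_trans (leq_add (HB1 _ Hcr1 i Hi) (HB2 _ Hcr2 i Hi)).
rewrite /row_complexity /= -big_split /=; apply: leq_sum => j _.
have m1 := @entry_mono r c f g1 i j.-1 Hfg1.
have m2 := @entry_mono r c f g2 i j.-1 Hfg2.
have z : ~~ entry (BMat f) i j -> ~~ entry (BMat g1) i j || ~~ entry (BMat g2) i j.
  have := @entry_ord r c f (Ordinal Hi) j; have := @entry_ord r c g1 (Ordinal Hi) j.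
  have := @entry_ord r c g2 (Ordinal Hi) j; rewrite /= => -> -> ->.
  by case E: (f _) => //= _; case: (Hz _ E) => ->; rewrite ?orbT.
move: m1 m2 z.
case: (entry (BMat f) i j); case: (entry (BMat f) i j.-1);
case: (entry (BMat g1) i j); case: (entry (BMat g1) i j.-1);
case: (entry (BMat g2) i j); case: (entry (BMat g2) i j.-1);
case: (nat_of_ord j == 0) => //= ; try by move=> /(_ isT).
all: try by move=> _ /(_ isT).
all: by move=> _ _ /(_ isT).
Qed.
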